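(* For every integer $n\ge 0$, \[ \sum_{j=0}^{n} \frac{q^{j}(q;q)_{n+j}}{(q^2;q^2)_j}=(q^2;q^2)_n . \]
   Context: $(a;q)_0:=1$ and $(a;q)_n:=(1-a)(1-aq)\cdots(1-aq^{n-1})$ for $n\ge1$. *)

(* Defs.v *)
From mathcomp Require Import all_boot all_order all_algebra.
Set Implicit Arguments. Unset Strict Implicit. Unset Printing Implicit Defensive.
Import GRing.Theory.
Local Open Scope ring_scope.

Definition qpoch (R : nzRingType) (a q : R) (n : nat) : R :=
  \prod_(i < n) (1 - a * q ^+ i).

(* Main.v *)
Require Import Defs.
From mathcomp Require Import all_boot all_order all_algebra.
From mathcomp Require Import ring.
Import GRing.Theory.
Local Open Scope ring_scope.

Lemma qpochS (R : nzRingType) (a q : R) n :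
  qpoch a q n.+1 = qpoch a q n * (1 - a * q ^+ n).
Proof. by rewrite /qpoch big_ord_recr. Qed.

Lemma qpoch_neq0 (F : fieldType) (a q : F) m n :
  (m <= n)%N -> qpoch a q n != 0 -> qpoch a q m != 0.
Proof.
elim: n => [|n IH]; first by rewrite leqn0 => /eqP ->.
rewrite leq_eqVlt => /orP [/eqP -> //|]; rewrite ltnS => hm.
rewrite qpochS mulf_eq0 negb_or => /andP [h _]; exact: IH.
Qed.

Arguments qpoch_neq0 {F a q m n}.
Section S.
Variables (F : fieldType) (q : F).
Let P j := qpoch (q ^+ 2) (q ^+ 2) j.
Let Q m := qpoch q q m.
Let T n j := q ^+ j * Q (n + j) / P j.
Let G n j := - q ^+ n.+1 * Q (n + j) * (1 - q ^+ (2 * j)) / P j.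

Lemma PS j : P j.+1 = P j * (1 - q ^+ 2 * q ^+ (2 * j)).
Proof. rewrite /P qpochS; congr (_ * (1 - _ * _)); by rewrite -exprM. Qed.

Lemma QS m : Q m.+1 = Q m * (1 - q ^+ m.+1).
Proof. by rewrite /Q qpochS -exprS. Qed.

Lemma step n j : P j.+1 != 0 ->
  T n.+1 j - (1 - q ^+ (2 * n.+1)) * T n j = G n j.+1 - G n j.
Proof.
move=> hP1.
have hP : P j != 0 by move: hP1; rewrite PS mulf_eq0 negb_or => /andP [].
have h2 : 1 - q ^+ 2 * q ^+ (2 * j) != 0
  by move: hP1; rewrite PS mulf_eq0 negb_or => /andP [].
rewrite /T /G PS addSn QS addnS QS.
move: h2.
have e2 : forall k, q ^+ (2 * k) = q ^+ k * q ^+ k by move=> k; rewrite mul2n -addnn exprD.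
rewrite !e2 !exprS exprD expr0.
move: hP; set p := P j => hP.
set a := q ^+ j; set b := q ^+ n; set c := Q (n + j).
move=> h2.
field; rewrite hP /=; by rewrite mulr1 in h2.
Qed.

Lemma main n : P n != 0 -> \sum_(j < n.+1) T n j = P n.
Proof.
elim: n => [|n IH] hn.
  by rewrite big_ord1 /T /Q /P /qpoch !big_ord0 expr0 mul1r divr1.
have hn' : P n != 0 by exact: (qpoch_neq0 (leqnSn n) hn).
have hj : forall j : 'I_n.+1, P j.+1 != 0 by move=> j; exact: (qpoch_neq0 (ltn_ord j) hn).
have E : \sum_(j < n.+1) (T n.+1 j - (1 - q ^+ (2 * n.+1)) * T n j)
   = \sum_(j < n.+1) (G n j.+1 - G n j) by apply: eq_bigr => j _; exact: step.
rewrite -(big_mkord xpredT (fun j => G n j.+1 - G n j)) telescope_sumr // in E.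
rewrite sumrB -mulr_sumr IH // in E.
rewrite big_ord_recr /=.
move/eqP: E; rewrite subr_eq => /eqP ->.
have G0 : G n 0 = 0 by rewrite /G muln0 expr0 subrr mulr0 mul0r.
have GT : G n n.+1 + T n.+1 n.+1 = 0.
  rewrite /G /T addSn QS -mulrDl; apply/eqP; rewrite mulf_eq0; apply/orP; left.
  rewrite mul2n -addnn !addSn addnS; apply/eqP; rewrite !exprS exprD; ring.
rewrite G0 subr0 PS addrAC GT add0r mulrC.
by rewrite -exprD mulnS.
Qed.
End S.

Theorem lemma3p3 (F : fieldType) (q : F) (n : nat)
  (hq : qpoch (q ^+ 2) (q ^+ 2) n != 0) :
  \sum_(j < n.+1) q ^+ j * qpoch q q (n + j) / qpoch (q ^+ 2) (q ^+ 2) j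
  = qpoch (q ^+ 2) (q ^+ 2) n.
Proof. exact: (@main F q n hq). Qed.
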